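(* $$\sum_{n=1}^\infty \frac{3^n H_n \binom{2n}{n}}{n\, 2^{4n}} = 2\,\mathrm{Li}_2\!\left(\tfrac{1}{3}\right).$$
   Context: $H_n=\sum_{k=1}^n \frac{1}{k}$ denotes the $n$-th harmonic number and $\binom{2n}{n}$ the central binomial coefficient; $\mathrm{Li}_2(x)=\sum_{m=1}^\infty \frac{x^m}{m^2}$ for $|x|\le 1$ is the dilogarithm. *)

(* Defs.v *)
From Stdlib Require Import Reals.
From Coquelicot Require Import Coquelicot.
Open Scope R_scope.

Fixpoint harmonic (n : nat) : R :=
  match n with
  | O => 0
  | S m => harmonic m + / INR (S m)
  end.

Definition central_binom (n : nat) : R := Binomial.C (2 * n) n.

Definition Li2 (x : R) : R :=
  Series (fun m : nat => match m with O => 0 | S _ => x ^ m / (INR m ^ 2) end).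

Definition mainTerm (n : nat) : R :=
  match n with
  | O => 0
  | S _ => 3 ^ n * harmonic n * central_binom n / (INR n * 2 ^ (4 * n))
  end.

(* Main.v *)
Require Import Defs.
From Stdlib Require Import Reals Lra Lia Arith Factorial.
From Coquelicot Require Import Coquelicot.
Open Scope R_scope.

Definition cc (n : nat) : R := central_binom n.
Definition qq (n : nat) : R := harmonic n * cc n.

Lemma cc_fact n : cc n = INR (fact (2*n)) / (INR (fact n) * INR (fact n)).
Proof.
  unfold cc, central_binom, Binomial.C. replace (2*n - n)%nat with n by lia. reflexivity.
Qed.

Lemma cc_0 : cc 0 = 1.
Proof. rewrite cc_fact. simpl. field. Qed.

Lemma cc_S n : cc (S n) * INR (S n) = (4 * INR n + 2) * cc n.
Proof.
  rewrite !cc_fact. replace (2 * S n)%nat with (S (S (2*n))) by lia.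
  change (fact (S (S (2*n)))) with ((S (S (2*n))) * fact (S (2*n)))%nat.
  change (fact (S (2*n))) with ((S (2*n)) * fact (2*n))%nat.
  change (fact (S n)) with ((S n) * fact n)%nat.
  rewrite !mult_INR. rewrite !S_INR. rewrite mult_INR. simpl (INR 2).
  assert (H1 := INR_fact_neq_0 n). assert (H2 := pos_INR n).
  field. split; [exact H1| lra].
Qed.

Lemma cc_pos n : 0 < cc n.
Proof. rewrite cc_fact. apply Rdiv_lt_0_compat. apply INR_fact_lt_0.
  apply Rmult_lt_0_compat; apply INR_fact_lt_0. Qed.

Lemma cc_le n : cc n <= 4 ^ n.
Proof.
  induction n. rewrite cc_0; simpl; lra.
  assert (H := cc_S n). assert (H2 := pos_INR n). rewrite S_INR in H.
  assert (Hc := cc_pos n).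
  assert (cc (S n) = (4 * INR n + 2) * cc n / (INR n + 1)) by (rewrite <- H; field; lra).
  rewrite H0. simpl. apply Rle_trans with (4 * cc n).
  apply Rmult_le_reg_r with (INR n + 1). lra. field_simplify; nra.
  lra.
Qed.

Lemma harm_nonneg n : 0 <= harmonic n.
Proof. induction n. simpl; lra. change (harmonic (S n)) with (harmonic n + / INR (S n)). assert (0 < / INR (S n)) by (apply Rinv_0_lt_compat, lt_0_INR; lia). lra. Qed.

Lemma harm_le n : harmonic n <= 3 * (6/5)^n.
Proof.
  induction n. simpl; lra.
  destruct n. simpl. rewrite Rinv_1. lra.
  change (harmonic (S (S n))) with (harmonic (S n) + / INR (S (S n))).
  assert (/ INR (S (S n)) <= 1/2).
  { rewrite !S_INR. assert (H := pos_INR n). apply Rle_trans with (/2). apply Rinv_le_contravar; lra. lra. }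
  assert (1 <= (6/5)^(S n)) by (apply pow_R1_Rle; lra).
  change ((6/5)^(S (S n))) with (6/5 * (6/5)^(S n)). lra.
Qed.

Lemma qq_S n : INR (S n) * qq (S n) = (4 * INR n + 2) * qq n + cc (S n).
Proof.
  unfold qq. change (harmonic (S n)) with (harmonic n + / INR (S n)).
  replace ((4 * INR n + 2) * (harmonic n * cc n)) with (harmonic n * ((4 * INR n + 2) * cc n)) by ring.
  rewrite <- cc_S. assert (0 < INR (S n)) by (apply lt_0_INR; lia). field. lra.
Qed.

Definition aa (n : nat) : R := match n with O => 0 | S _ => qq n / INR n end.
Definition ll (n : nat) : R := match n with O => 0 | S _ => / (INR n ^ 2) end.
Definition mm (n : nat) : R := match n with O => 0 | S _ => / INR n end.

Lemma radius_ge a r : CV_disk a r -> Rbar_le r (CV_radius a).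
Proof. intro H. exact (proj1 (Lub_Rbar_correct (CV_disk a)) r H). Qed.

Lemma disk_bound a r K rho : 0 <= rho < 1 -> (forall n, Rabs (a n * r^n) <= K * rho^n) -> CV_disk a r.
Proof.
  intros Hr H. unfold CV_disk. apply (@ex_series_le R_AbsRing R_CompleteNormedModule) with (b := fun n => K * rho^n).
  intro n. unfold norm; simpl. unfold abs; simpl. rewrite Rabs_Rabsolu. apply H.
  exists (K * / (1 - rho)). apply (is_series_scal_l K (fun n => rho^n)). apply is_series_geom. rewrite Rabs_right; lra.
Qed.

Lemma qq_nonneg n : 0 <= qq n.
Proof. unfold qq. apply Rmult_le_pos. apply harm_nonneg. left; apply cc_pos. Qed.

Lemma qq_bound n : qq n * (1/5)^n <= 3 * (24/25)^n.
Proof.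
  replace ((24/25)^n) with ((6/5)^n * 4^n * (1/5)^n) by (rewrite <- !Rpow_mult_distr; f_equal; lra).
  unfold qq. assert (0 < (1/5)^n) by (apply pow_lt; lra).
  replace (3 * ((6/5)^n * 4^n * (1/5)^n)) with ((3 * (6/5)^n) * 4^n * (1/5)^n) by ring.
  apply Rmult_le_compat_r. lra.
  apply Rmult_le_compat. apply harm_nonneg. left; apply cc_pos. apply harm_le. apply cc_le.
Qed.

Lemma disk_qq : CV_disk qq (1/5).
Proof.
  apply disk_bound with 3 (24/25). lra. intro n.
  rewrite Rabs_right. apply qq_bound. apply Rle_ge, Rmult_le_pos. apply qq_nonneg. apply pow_le; lra.
Qed.

Lemma disk_cc : CV_disk cc (1/5).
Proof.
  apply disk_bound with 1 (4/5). lra. intro n.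
  assert (0 < (1/5)^n) by (apply pow_lt; lra).
  rewrite Rabs_right. replace ((4/5)^n) with (4^n * (1/5)^n) by (rewrite <- !Rpow_mult_distr; f_equal; lra).
  rewrite Rmult_1_l. apply Rmult_le_compat_r. lra. apply cc_le.
  apply Rle_ge, Rmult_le_pos. left; apply cc_pos. lra.
Qed.

Lemma disk_aa : CV_disk aa (1/5).
Proof.
  apply disk_bound with 3 (24/25). lra. intro n.
  assert (0 < (1/5)^n) by (apply pow_lt; lra).
  destruct n. simpl. rewrite Rmult_0_l, Rabs_R0. lra.
  unfold aa. assert (1 <= INR (S n)) by (apply (le_INR 1); lia).
  assert (H1 := qq_nonneg (S n)).
  rewrite Rabs_right. apply Rle_trans with (qq (S n) * (1/5)^(S n)). apply Rmult_le_compat_r. lra.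
  unfold Rdiv. rewrite <- (Rmult_1_r (qq (S n))) at 2. apply Rmult_le_compat_l. lra.
  rewrite <- Rinv_1. apply Rinv_le_contravar; lra.
  apply qq_bound.
  apply Rle_ge, Rmult_le_pos. apply Rmult_le_pos. lra. left; apply Rinv_0_lt_compat; lra. lra.
Qed.

Lemma disk_ll : CV_disk ll (1/2).
Proof.
  apply disk_bound with 1 (1/2). lra. intro n.
  assert (0 < (1/2)^n) by (apply pow_lt; lra).
  destruct n. simpl. rewrite Rmult_0_l, Rabs_R0. lra.
  unfold ll. assert (1 <= INR (S n)) by (apply (le_INR 1); lia).
  assert (1 <= INR (S n) ^2) by nra.
  rewrite Rabs_right. rewrite Rmult_1_l. rewrite <- (Rmult_1_l ((1/2)^(S n))) at 2.
  apply Rmult_le_compat_r. lra. rewrite <- Rinv_1. apply Rinv_le_contravar; lra.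
  apply Rle_ge, Rmult_le_pos. left; apply Rinv_0_lt_compat; lra. lra.
Qed.

Lemma disk_mm : CV_disk mm (1/2).
Proof.
  apply disk_bound with 1 (1/2). lra. intro n.
  assert (0 < (1/2)^n) by (apply pow_lt; lra).
  destruct n. simpl. rewrite Rmult_0_l, Rabs_R0. lra.
  unfold mm. assert (1 <= INR (S n)) by (apply (le_INR 1); lia).
  rewrite Rabs_right. rewrite Rmult_1_l. rewrite <- (Rmult_1_l ((1/2)^(S n))) at 2.
  apply Rmult_le_compat_r. lra. rewrite <- Rinv_1. apply Rinv_le_contravar; lra.
  apply Rle_ge, Rmult_le_pos. left; apply Rinv_0_lt_compat; lra. lra.
Qed.

Lemma in_rad a r x : CV_disk a r -> Rabs x < r -> Rbar_lt (Rabs x) (CV_radius a).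
Proof. intros H1 H2. apply Rbar_lt_le_trans with (Finite r). exact H2. apply radius_ge; exact H1. Qed.

Lemma PS_lin2 a b d x u v : ex_pseries b x -> ex_pseries d x ->
  (forall n, a n = u * b n + v * d n) -> PSeries a x = u * PSeries b x + v * PSeries d x.
Proof.
  intros Hb Hd H. rewrite (PSeries_ext a (PS_plus (PS_scal u b) (PS_scal v d))).
  rewrite PSeries_plus. rewrite !PSeries_scal. reflexivity.
  apply ex_pseries_scal; auto. apply Rmult_comm. apply ex_pseries_scal; auto. apply Rmult_comm.
  intro n. rewrite H. reflexivity.
Qed.

Lemma PS_lin3 a b d e x u v t : ex_pseries b x -> ex_pseries d x -> ex_pseries e x ->
  (forall n, a n = u * b n + v * d n + t * e n) -> PSeries a x = u * PSeries b x + v * PSeries d x + t * PSeries e x.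
Proof.
  intros Hb Hd He H. rewrite (PSeries_ext a (PS_plus (PS_plus (PS_scal u b) (PS_scal v d)) (PS_scal t e))).
  rewrite PSeries_plus. rewrite PSeries_plus. rewrite !PSeries_scal. reflexivity.
  apply ex_pseries_scal; auto. apply Rmult_comm. apply ex_pseries_scal; auto. apply Rmult_comm.
  apply ex_pseries_plus; (apply ex_pseries_scal; auto; apply Rmult_comm).
  apply ex_pseries_scal; auto. apply Rmult_comm.
  intro n. rewrite H. reflexivity.
Qed.

Lemma SB x : Rabs x < 1/5 ->
  PSeries (PS_derive cc) x = 4 * (x * PSeries (PS_derive cc) x) + 2 * PSeries cc x.
Proof.
  intro Hx. assert (Hr := in_rad cc (1/5) x disk_cc Hx).
  rewrite <- PSeries_incr_1.
  apply PS_lin2. apply ex_pseries_incr_1, ex_pseries_derive, Hr. apply CV_radius_inside, Hr.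
  intro n. unfold PS_derive, PS_incr_1. destruct n.
  - change (@zero _) with 0. assert (H := cc_S 0). simpl INR in *. lra.
  - assert (H := cc_S (S n)). lra.
Qed.

Lemma SQ x : Rabs x < 1/5 ->
  PSeries (PS_derive qq) x = 4 * (x * PSeries (PS_derive qq) x) + 2 * PSeries qq x + 1 * PSeries (PS_decr_1 cc) x.
Proof.
  intro Hx. assert (Hr := in_rad qq (1/5) x disk_qq Hx).
  assert (Hc := in_rad cc (1/5) x disk_cc Hx).
  rewrite <- PSeries_incr_1.
  apply PS_lin3. apply ex_pseries_incr_1, ex_pseries_derive, Hr. apply CV_radius_inside, Hr.
  apply CV_radius_inside. rewrite CV_radius_decr_1. exact Hc.
  intro n. unfold PS_derive, PS_incr_1, PS_decr_1. destruct n.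
  - change (@zero _) with 0. assert (H := qq_S 0). simpl INR in *. lra.
  - assert (H := qq_S (S n)). lra.
Qed.

Lemma der_aa n : PS_derive aa n = PS_decr_1 qq n.
Proof. unfold PS_derive, PS_decr_1, aa. assert (0 < INR (S n)) by (apply lt_0_INR; lia). field. lra. Qed.

Lemma der_ll n : PS_derive ll n = PS_decr_1 mm n.
Proof. unfold PS_derive, PS_decr_1, ll, mm. assert (0 < INR (S n)) by (apply lt_0_INR; lia). field. lra. Qed.

Lemma der_mm n : PS_derive mm n = 1.
Proof. unfold PS_derive, mm. assert (0 < INR (S n)) by (apply lt_0_INR; lia). field. lra. Qed.

Lemma geom_ps y : Rabs y < 1 -> PSeries (fun _ => 1) y = / (1 - y).
Proof.
  intro H. unfold PSeries. rewrite (Series_ext _ (fun k => y ^ k)).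
  apply is_series_unique, is_series_geom, H. intro; ring.
Qed.

Definition X (y : R) := y / (1 + y)^2.
Definition dX (y : R) := (1 - y) / (1 + y)^3.
Definition w (y : R) := (1 - y) / (1 + y).
Definition dw (y : R) := -2 / (1 + y)^2.

Lemma der_X y : 0 <= y -> is_derive X y (dX y).
Proof. intro H. unfold X, dX. auto_derive. nra. field. lra. Qed.

Lemma der_w y : 0 <= y -> is_derive w y (dw y).
Proof. intro H. unfold w, dw. auto_derive. lra. field. lra. Qed.

Lemma X_range y : 0 <= y <= 1/3 -> Rabs (X y) < 1/5.
Proof.
  intro H. unfold X. assert (0 < (1+y)^2) by nra.
  rewrite Rabs_right. apply Rmult_lt_reg_r with ((1+y)^2). lra. unfold Rdiv. rewrite Rmult_assoc, Rinv_l by lra. nra.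
  apply Rle_ge. apply Rdiv_le_0_compat; lra.
Qed.

Lemma der_mul f g x df dg : is_derive f x df -> is_derive g x dg ->
  is_derive (fun t => f t * g t) x (df * g x + f x * dg).
Proof. intros. apply (is_derive_mult f g); auto. intros; apply Rmult_comm. Qed.

Lemma der_comp a r y : CV_disk a r -> 0 <= y -> Rabs (X y) < r ->
  is_derive (fun t => PSeries a (X t)) y (dX y * PSeries (PS_derive a) (X y)).
Proof.
  intros Hd Hy Hx. apply (is_derive_comp (PSeries a) X). apply is_derive_PSeries.
  apply in_rad with r; auto. apply der_X; auto.
Qed.

Lemma der_ps a r y : CV_disk a r -> Rabs y < r ->
  is_derive (PSeries a) y (PSeries (PS_derive a) y).
Proof. intros. apply is_derive_PSeries. apply in_rad with r; auto. Qed.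

Lemma const0 f b : 0 <= b <= 1/3 -> (forall y, 0 <= y <= 1/3 -> ex_derive f y) ->
  (forall y, 0 < y < 1/3 -> is_derive f y 0) -> f b = f 0.
Proof.
  intros Hb Hex H0. destruct (Req_dec b 0) as [->|Hn]. reflexivity.
  assert (H := MVT_gen f 0 b (fun _ => 0)). cbv zeta in H.
  rewrite Rmin_left, Rmax_right in H by lra.
  destruct H as [c [_ Hc]].
  - intros x Hx. apply H0. lra.
  - intros x Hx. apply continuity_pt_filterlim. assert (Hx2 : 0 <= x <= 1/3) by lra. exact (ex_derive_continuous f x (Hex x Hx2)).
  - lra.
Qed.

Lemma X0 : X 0 = 0.
Proof. unfold X. field. Qed.
Lemma w0 : w 0 = 1.
Proof. unfold w. field. Qed.

Lemma one_m4X t : 0 <= t -> 1 - 4 * X t = w t ^ 2.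
Proof. intro. unfold X, w. field. lra. Qed.

Lemma w_pos t : 0 <= t <= 1/3 -> 0 < w t.
Proof. intro. unfold w. apply Rdiv_lt_0_compat; lra. Qed.

Lemma B_closed y : 0 <= y <= 1/3 -> PSeries cc (X y) * w y = 1.
Proof.
  intro Hy.
  set (E := fun t => PSeries cc (X t) * w t).
  assert (Hd : forall t, 0 <= t <= 1/3 -> is_derive E t
     (dX t * PSeries (PS_derive cc) (X t) * w t + PSeries cc (X t) * dw t)).
  { intros t Ht. unfold E. apply (der_mul (fun s => PSeries cc (X s)) w). apply (der_comp cc (1/5)). apply disk_cc. lra. apply X_range; auto.
    apply der_w; lra. }
  change (E y = 1). transitivity (E 0).
  apply const0; auto. intros t Ht. eexists; apply Hd; auto.
  intros t Ht. replace 0 with (dX t * PSeries (PS_derive cc) (X t) * w t + PSeries cc (X t) * dw t).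
  apply Hd; lra.
  assert (HS := SB (X t) (X_range t ltac:(lra))).
  set (b := PSeries cc (X t)) in *. set (b1 := PSeries (PS_derive cc) (X t)) in *.
  assert (H4 := one_m4X t ltac:(lra)). assert (Hw := w_pos t ltac:(lra)).
  assert (Hb1 : b1 = 2 * b / w t ^ 2).
  { apply (Rmult_eq_reg_r (w t ^ 2)). unfold Rdiv. rewrite Rmult_assoc, Rinv_l. rewrite <- H4. nra.
    apply pow_nonzero; lra. apply pow_nonzero; lra. }
  rewrite Hb1. unfold dX, dw, w. field. lra.
  unfold E. rewrite X0, w0, PSeries_0, cc_0. ring.
Qed.

Lemma der_sub f g x df dg : is_derive f x df -> is_derive g x dg ->
  is_derive (fun t => f t - g t) x (df - dg).
Proof. intros. apply (is_derive_minus f g); auto. Qed.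

Lemma Q_closed y : 0 <= y <= 1/3 -> PSeries qq (X y) * w y = 2 * PSeries mm y.
Proof.
  intro Hy.
  set (E := fun t => PSeries qq (X t) * w t - 2 * PSeries mm t).
  assert (Hd : forall t, 0 <= t <= 1/3 -> is_derive E t
     ((dX t * PSeries (PS_derive qq) (X t) * w t + PSeries qq (X t) * dw t)
      - 2 * PSeries (PS_derive mm) t)).
  { intros t Ht. unfold E. apply (der_sub (fun s => PSeries qq (X s) * w s) (fun s => 2 * PSeries mm s)).
    apply (der_mul (fun s => PSeries qq (X s)) w). apply (der_comp qq (1/5)). apply disk_qq. lra. apply X_range; auto.
    apply der_w; lra.
    apply is_derive_scal. apply (der_ps mm (1/2)). apply disk_mm. rewrite Rabs_right; lra. }
  apply (Rminus_diag_uniq _ (2 * PSeries mm y)).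
  change (E y = 0). transitivity (E 0).
  apply const0; auto. intros t Ht. eexists; apply Hd; auto.
  intros t Ht. replace 0 with ((dX t * PSeries (PS_derive qq) (X t) * w t + PSeries qq (X t) * dw t)
      - 2 * PSeries (PS_derive mm) t).
  apply Hd; lra.
  assert (HS := SQ (X t) (X_range t ltac:(lra))).
  assert (HB := B_closed t ltac:(lra)).
  assert (HBd : PSeries cc (X t) = cc 0 + X t * PSeries (PS_decr_1 cc) (X t)).
  { apply PSeries_decr_1. apply CV_radius_inside. apply in_rad with (1/5). apply disk_cc. apply X_range; lra. }
  rewrite (PSeries_ext (PS_derive mm) (fun _ => 1)) by apply der_mm. rewrite geom_ps by (rewrite Rabs_right; lra).
  rewrite cc_0 in HBd.
  set (b := PSeries cc (X t)) in *. set (bd := PSeries (PS_decr_1 cc) (X t)) in *.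
  set (Q := PSeries qq (X t)) in *. set (Q1 := PSeries (PS_derive qq) (X t)) in *.
  assert (H4 := one_m4X t ltac:(lra)). assert (Hw := w_pos t ltac:(lra)).
  assert (HX : 0 < X t). { unfold X. apply Rdiv_lt_0_compat; nra. }
  assert (Hbd : bd = (/ w t - 1) / X t).
  { apply (Rmult_eq_reg_r (X t)). unfold Rdiv. rewrite Rmult_assoc, Rinv_l by lra.
    apply (Rmult_eq_reg_r (w t)). field_simplify. 2: lra. nra. lra. lra. }
  assert (Hq1 : Q1 = (2 * Q + bd) / w t ^ 2).
  { apply (Rmult_eq_reg_r (w t ^ 2)). unfold Rdiv. rewrite Rmult_assoc, Rinv_l. rewrite <- H4. nra.
    apply pow_nonzero; lra. apply pow_nonzero; lra. }
  rewrite Hq1, Hbd. unfold dX, dw, w, X. field. repeat split; try lra. 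
  unfold E. rewrite X0, w0, !PSeries_0. unfold qq, mm. simpl. ring.
Qed.

Lemma P_closed y : 0 <= y <= 1/3 -> PSeries aa (X y) = 2 * PSeries ll y.
Proof.
  intro Hy.
  set (E := fun t => PSeries aa (X t) - 2 * PSeries ll t).
  assert (Hd : forall t, 0 <= t <= 1/3 -> is_derive E t
     (dX t * PSeries (PS_derive aa) (X t) - 2 * PSeries (PS_derive ll) t)).
  { intros t Ht. unfold E. apply (der_sub (fun s => PSeries aa (X s)) (fun s => 2 * PSeries ll s)).
    apply (der_comp aa (1/5)). apply disk_aa. lra. apply X_range; auto.
    apply is_derive_scal. apply (der_ps ll (1/2)). apply disk_ll. rewrite Rabs_right; lra. }
  apply (Rminus_diag_uniq _ (2 * PSeries ll y)).
  change (E y = 0). transitivity (E 0).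
  apply const0; auto. intros t Ht. eexists; apply Hd; auto.
  intros t Ht. replace 0 with (dX t * PSeries (PS_derive aa) (X t) - 2 * PSeries (PS_derive ll) t).
  apply Hd; lra.
  rewrite (PSeries_ext (PS_derive aa) (PS_decr_1 qq)) by apply der_aa.
  rewrite (PSeries_ext (PS_derive ll) (PS_decr_1 mm)) by apply der_ll.
  assert (HQ := Q_closed t ltac:(lra)).
  assert (H1 : PSeries qq (X t) = X t * PSeries (PS_decr_1 qq) (X t)).
  { apply PSeries_decr_1_aux. unfold qq. simpl. ring. }
  assert (H2 : PSeries mm t = t * PSeries (PS_decr_1 mm) t).
  { apply PSeries_decr_1_aux. reflexivity. }
  rewrite H1, H2 in HQ.
  set (Qd := PSeries (PS_decr_1 qq) (X t)) in *. set (Md := PSeries (PS_decr_1 mm) t) in *.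
  assert (HM : Md = X t * Qd * w t / (2 * t)).
  { apply (Rmult_eq_reg_r (2 * t)). unfold Rdiv. rewrite Rmult_assoc, Rinv_l by lra. lra. lra. }
  rewrite HM. unfold dX, w, X. field. lra.
  unfold E. rewrite X0, !PSeries_0. unfold aa, ll. ring.
Qed.

Lemma X13 : X (1/3) = 3/16.
Proof. unfold X. field. Qed.

Theorem mainTheorem11 : is_series mainTerm (2 * Li2 (1 / 3)).
Proof.
  assert (HL : Li2 (1/3) = PSeries ll (1/3)).
  { unfold Li2, PSeries. apply Series_ext. intro n. destruct n. simpl. ring. unfold ll. field.
    apply not_0_INR. lia. }
  rewrite HL, <- P_closed by lra. rewrite X13.
  apply is_series_ext with (fun n => aa n * (3/16)^n).
  - intro n. destruct n. unfold mainTerm, aa. simpl. ring. unfold mainTerm, aa, qq, central_binom. fold (cc (S n)).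
    rewrite pow_mult. replace (2^4) with 16 by ring.
    replace (3/16) with (3 * / 16) by field. rewrite Rpow_mult_distr, pow_inv. unfold cc, central_binom. match goal with |- ?a = ?b => change (@eq R a b) end. field. split.
    apply pow_nonzero; lra. apply not_0_INR; lia.
  - unfold PSeries. apply Series_correct. apply ex_pseries_R. apply CV_radius_inside.
    apply in_rad with (1/5). apply disk_aa. rewrite Rabs_right; lra.
Qed.
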